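(* Let $\mathcal{H}$ be a $[3]$-graph, let $\mathcal{C}=v_1,e_1,\dots,v_\ell,e_\ell,v_1$ be a maximal Berge cycle in $\mathcal{H}$, let $u\in V(\mathcal{H})\setminus V(\mathcal{C})$, and let $U_u$ be a usable set for $u$. If $v_i,v_j\in U_u$ are distinct and adjacent, then $E(v_i,v_j)\subseteq\{e_i,e_j\}$.
   Context: A $[3]$-graph is a hypergraph in which every edge has at most $3$ vertices. A Berge cycle $\mathcal{C}=v_1,e_1,\dots,v_\ell,e_\ell,v_1$ consists of distinct edges $e_1,\dots,e_\ell$ and distinct vertices $v_1,\dots,v_\ell$ with $\{v_i,v_{i+1}\}\subseteq e_i$ (indices modulo $\ell$); $V(\mathcal{C})=\{v_1,\dots,v_\ell\}$. A Berge cycle $\mathcal{C}$ is maximal if there is no Berge cycle $\mathcal{C}'$ with $V(\mathcal{C})\subsetneq V(\mathcal{C}')$. For vertices $x,y$, $E(x,y)$ is the set of edges containing both; $x,y$ are adjacent if $E(x,y)\ne\emptyset$. A set $U_u\subseteq V(\mathcal{C})$ is usable for $u\notin V(\mathcal{C})$ if: (1) for every $v_i\in U_u$, $E(u,v_{i-1})\setminus\{e_{i-2}\}\neq\emptyset$; (2) for any distinct $v_i,v_j\in U_u$, $v_i$ and $v_j$ are not consecutive on $\mathcal{C}$; (3) for any distinct $v_i,v_j\in U_u$ there exist edges $e(u,v_{i-1})\in E(u,v_{i-1})\setminus\{e_{i-2}\}$ and $e(u,v_{j-1})\in E(u,v_{j-1})\setminus\{e_{j-2}\}$ with $e(u,v_{i-1})\neq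 e(u,v_{j-1})$. *)

(* Defs.v *)
From mathcomp Require Import all_boot.
Set Implicit Arguments. Unset Strict Implicit. Unset Printing Implicit Defensive.

Section Hyper.
Variable V : finType.

Definition three_graph (H : {set {set V}}) : Prop :=
  forall f, f \in H -> #|f| <= 3.

(* Berge cycle v_0,e_0,...,v_{l-1},e_{l-1},v_0 (0-based; indices mod l). *)
Definition berge_cycle (H : {set {set V}}) (l : nat)
    (v : nat -> V) (e : nat -> {set V}) : Prop :=
  [/\ 2 <= l,
      forall i j, i < l -> j < l -> v i = v j -> i = j,
      forall i j, i < l -> j < l -> e i = e j -> i = j,
      forall i, i < l -> e i \in H &
      forall i, i < l -> (v i \in e i) && (v (i.+1 %% l) \in e i)].

Definition cycle_vset (l : nat) (v : nat -> V) : {set V} :=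
  [set v (nat_of_ord i) | i : 'I_l].

Definition maximal_berge_cycle (H : {set {set V}}) (l : nat)
    (v : nat -> V) (e : nat -> {set V}) : Prop :=
  berge_cycle H l v e /\
  forall l' v' e', berge_cycle H l' v' e' ->
    ~ (cycle_vset l v \proper cycle_vset l' v').

Definition EE (H : {set {set V}}) (x y : V) : {set {set V}} :=
  [set f in H | (x \in f) && (y \in f)].

Definition adjacent (H : {set {set V}}) (x y : V) : Prop := EE H x y != set0.

Definition prevI (l i : nat) : nat := (i + l - 1) %% l.
Definition prev2I (l i : nat) : nat := (i + l - 2) %% l.

Definition avail (H : {set {set V}}) (l : nat) (v : nat -> V)
    (e : nat -> {set V}) (u : V) (i : nat) : {set {set V}} :=
  EE H u (v (prevI l i)) :\ e (prev2I l i).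

Definition usable (H : {set {set V}}) (l : nat) (v : nat -> V)
    (e : nat -> {set V}) (u : V) (U : {set V}) : Prop :=
  [/\ U \subset cycle_vset l v,
      forall i, i < l -> v i \in U -> avail H l v e u i != set0,
      (* (2) *)
      forall i j, i < l -> j < l -> i != j -> v i \in U -> v j \in U ->
        j != i.+1 %% l &
      (* (3) *)
      forall i j, i < l -> j < l -> i != j -> v i \in U -> v j \in U ->
        exists f g, [/\ f \in avail H l v e u i, g \in avail H l v e u j & f != g]].

End Hyper.

(* Main.v *)
Require Import Defs.
From mathcomp Require Import all_boot.
From mathcomp Require Import zify.
Set Implicit Arguments. Unset Strict Implicit. Unset Printing Implicit Defensive.

Lemma card4 (T:finType) (S: {set T}) x y z t : x \in S -> y\in S -> z \in S -> t\in S ->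
  x != y -> x != z -> x != t -> y != z -> y != t -> z != t -> 3 < #|S|.
Proof.
move=> hx hy hz ht nxy nxz nxt nyz nyt nzt.
have sub : x |: (y |: (z |: [set t])) \subset S.
  by apply/subsetP => q; rewrite !inE => /orP[|/orP[|/orP[]]] /eqP ->.
apply: leq_trans (subset_leq_card sub).
rewrite !cardsU1 cards1 !inE (negbTE nxy) (negbTE nxz) (negbTE nxt) (negbTE nyz) (negbTE nyt) (negbTE nzt).
by [].
Qed.


Definition qf a k := if k <= a then a - k else k.-1.
Definition rf a k := if k < a then a - k.+1 else k.-1.
Definition isEf a l k := (0 < k < a) || (a < k < l).

Section Ar.
Variables (a l : nat) (a2 : 2 <= a) (al : a + 2 <= l).
Lemma qlt k : 0 < k <= l -> qf a k < l.
Proof. rewrite /qf; case: ifP => ?; lia. Qed.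
Lemma qinj x y : 0 < x <= l -> 0 < y <= l -> qf a x = qf a y -> x = y.
Proof. rewrite /qf; case: ifP => ?; case: ifP => ?; lia. Qed.
Lemma rlt k : isEf a l k -> (rf a k).+1 < l.
Proof. rewrite /isEf /rf; case: ifP => ?; lia. Qed.
Lemma rna k : isEf a l k -> rf a k != a.-1.
Proof. rewrite /isEf /rf; case: ifP => ?; lia. Qed.
Lemma rinj x y : isEf a l x -> isEf a l y -> rf a x = rf a y -> x = y.
Proof. rewrite /isEf /rf; case: ifP => ?; case: ifP => ?; lia. Qed.
Lemma gcase k : k <= l -> [\/ k = 0, k = a, k = l | isEf a l k].
Proof.
move=> hk; case: (eqVneq k 0) => [->|k0]; first by constructor 1.
case: (eqVneq k a) => [->|ka]; first by constructor 2.
case: (eqVneq k l) => [->|kl]; first by constructor 3.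
by constructor 4; rewrite /isEf; lia.
Qed.
Lemma q1 : qf a 1 = a.-1.
Proof. rewrite /qf; case: ifP => ?; lia. Qed.
Lemma qa : qf a a = 0.
Proof. rewrite /qf; case: ifP => ?; lia. Qed.
Lemma qa1 : qf a a.+1 = a.
Proof. rewrite /qf; case: ifP => ?; lia. Qed.
Lemma ql : qf a l = l.-1.
Proof. rewrite /qf; case: ifP => ?; lia. Qed.
Lemma qr k : isEf a l k ->
  (qf a k = rf a k /\ qf a k.+1 = (rf a k).+1) \/ (qf a k = (rf a k).+1 /\ qf a k.+1 = rf a k).
Proof.
rewrite /isEf /qf /rf => hk; case: (ltnP k a) => ka.
  right; rewrite (_ : k <= a) ?(_ : k < a) //; lia.
left; rewrite (_ : k <= a = false) ?(_ : k < a = false) ?(_ : k.+1 <= a = false) //; lia.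
Qed.
Lemma qsurj t : t < l -> exists2 k, (0 < k) && (k < l.+1) & qf a k = t.
Proof.
move=> ht; case: (ltnP t a) => ta.
  exists (a - t); first lia. rewrite /qf (_ : a - t <= a) //; lia.
exists t.+1; first lia. rewrite /qf (_ : t.+1 <= a = false) //; lia.
Qed.
Lemma isEk k : isEf a l k -> k.+1 < l.+1.
Proof. rewrite /isEf; lia. Qed.
End Ar.

Ltac ar := repeat match goal with
 | h : is_true (_ \in _) |- _ => clear h
 | h : forall _ : _, _ |- _ => clear h
 end; lia.

Lemma core (V: finType) (H : {set {set V}}) (l a : nat) (w0 : nat -> V)
  (e0 : nat -> {set V}) (u : V) (fi fj f : {set V}) :
 three_graph H ->
 2 <= a -> a + 2 <= l ->
 (forall x y, x < l -> y < l -> w0 x = w0 y -> x = y) ->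
 (forall x y, x < l -> y < l -> e0 x = e0 y -> x = y) ->
 (forall k, k < l -> e0 k \in H) ->
 (forall k, k.+1 < l -> (w0 k \in e0 k) && (w0 k.+1 \in e0 k)) ->
 (forall k, k < l -> u != w0 k) ->
 fi \in H -> u \in fi -> w0 (l.-1) \in fi -> fi != e0 (l.-2) ->
 fj \in H -> u \in fj -> w0 (a.-1) \in fj -> fj != e0 (a.-2) ->
 fi != fj ->
 f \in H -> w0 0 \in f -> w0 a \in f -> f != e0 0 -> f != e0 a ->
 exists w g, berge_cycle H l.+1 w g /\ u \in cycle_vset l.+1 w /\
   (forall k, k < l -> w0 k \in cycle_vset l.+1 w).
Proof.
move=> H3 a2 al winj einj eH ein uw fiH ufi wfi fine fjH ufj wfj fjne fij fH wf0 wfa fne0 fnea.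
have wne : forall x y, x < l -> y < l -> x != y -> w0 x != w0 y.
  by move=> x y hx hy; apply: contra => /eqP /winj; move=> h; apply/eqP; apply: h.
have no4 : forall S x y z t, S \in H -> x \in S -> y \in S -> z \in S -> t \in S ->
  x != y -> x != z -> x != t -> y != z -> y != t -> z != t -> False.
  move=> S x y z t SH *; have := H3 S SH; rewrite leqNgt.
  by rewrite (card4 (S := S) (x := x) (y := y) (z := z) (t := t)).
have Hfj : forall t, t.+1 < l -> t != a.-1 -> fj != e0 t.
  move=> t ht ta; apply/negP => /eqP E.
  case: (eqVneq t a.-2) => [ta2|ta2]; first by rewrite -ta2 E eqxx in fjne.
  have /andP[i1 i2] := ein t ht.
  rewrite -E in i1 i2.
  apply: (no4 fj u (w0 a.-1) (w0 t) (w0 t.+1)) => //; solve [ apply: uw; ar | apply: wne; ar ].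
have Hfi : forall t, t.+1 < l -> fi != e0 t.
  move=> t ht; apply/negP => /eqP E.
  case: (eqVneq t l.-2) => [ta2|ta2]; first by rewrite -ta2 E eqxx in fine.
  have /andP[i1 i2] := ein t ht.
  rewrite -E in i1 i2.
  apply: (no4 fi u (w0 l.-1) (w0 t) (w0 t.+1)) => //; solve [ apply: uw; ar | apply: wne; ar ].
have Hf : forall t, t.+1 < l -> t != a.-1 -> f != e0 t.
  move=> t ht ta; apply/negP => /eqP E.
  case: (eqVneq t 0) => [t0|t0]; first by rewrite -t0 -E eqxx in fne0.
  case: (eqVneq t a) => [t0'|t0']; first by rewrite -t0' -E eqxx in fnea.
  have /andP[i1 i2] := ein t ht.
  rewrite -E in i1 i2.
  apply: (no4 f (w0 0) (w0 a) (w0 t) (w0 t.+1)) => //; solve [ apply: uw; ar | apply: wne; ar ].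
have ffi : f != fi.
  apply/negP => /eqP E; rewrite -E in ufi wfi.
  apply: (no4 f u (w0 0) (w0 a) (w0 l.-1)) => //; solve [ apply: uw; ar | apply: wne; ar ].
have ffj : f != fj.
  apply/negP => /eqP E; rewrite -E in ufj wfj.
  apply: (no4 f u (w0 0) (w0 a) (w0 a.-1)) => //; solve [ apply: uw; ar | apply: wne; ar ].
have qlt := qlt a2 al. have qinj := qinj a2 al. have rlt := rlt a2 al.
have rna := rna a2 al. have rinj := rinj a2 al. have gcase := gcase a2 al.
pose w k := if k == 0 then u else w0 (qf a k).
have w0E : w 0 = u by [].
have wE : forall k, 0 < k -> w k = w0 (qf a k).
  by move=> k hk; rewrite /w; case: eqP => // k0; rewrite k0 in hk.
pose g k := if k == 0 then fj else if k == a then f else if k == l then fi else e0 (rf a k).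
have a0 : (a == 0) = false by apply/negbTE; rewrite -lt0n; clear -a2; lia.
have l0 : (l == 0) = false by apply/negbTE; rewrite -lt0n; clear -al; lia.
have la : (l == a) = false by apply/negbTE; apply/eqP; clear -al; lia.
have g0 : g 0 = fj by [].
have ga : g a = f by rewrite /g a0 eqxx.
have gl : g l = fi by rewrite /g l0 la eqxx.
have gE : forall k, isEf a l k -> g k = e0 (rf a k).
  move=> k hk; rewrite /g.
  have [k0 ka kl] : [/\ (k == 0) = false, (k == a) = false & (k == l) = false].
    by move: hk; rewrite /isEf; clear -al a2 => hk; split; apply/negbTE; apply/eqP; lia.
  by rewrite k0 ka kl.
have N1 : (fj == f) = false by apply/negbTE; rewrite eq_sym.
have N2 : (f == fj) = false by apply/negbTE.
have N3 : (fi == fj) = false by apply/negbTE.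
have N4 : (fj == fi) = false by apply/negbTE; rewrite eq_sym.
have N5 : (f == fi) = false by apply/negbTE.
have N6 : (fi == f) = false by apply/negbTE; rewrite eq_sym.
have N7 : forall k, isEf a l k -> (fj == e0 (rf a k)) = false /\ (e0 (rf a k) == fj) = false.
  by move=> k hk; have h := Hfj _ (rlt _ hk) (rna _ hk); split; apply/negbTE => //; rewrite eq_sym.
have N8 : forall k, isEf a l k -> (fi == e0 (rf a k)) = false /\ (e0 (rf a k) == fi) = false.
  by move=> k hk; have h := Hfi _ (rlt _ hk); split; apply/negbTE => //; rewrite eq_sym.
have N9 : forall k, isEf a l k -> (f == e0 (rf a k)) = false /\ (e0 (rf a k) == f) = false.
  by move=> k hk; have h := Hf _ (rlt _ hk) (rna _ hk); split; apply/negbTE => //; rewrite eq_sym.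
exists w, g; split; last split.
- split.
  + clear -al; lia.
  + move=> x y hx hy.
    case: (eqVneq x 0) => [->|x0]; case: (eqVneq y 0) => [->|y0] //.
    * have hy' : 0 < y <= l by clear -hy y0; lia.
      rewrite w0E wE ?lt0n // => E.
      by have := uw _ (qlt y hy'); rewrite E eqxx.
    * have hx' : 0 < x <= l by clear -hx x0; lia.
      rewrite w0E wE ?lt0n // => E.
      by have := uw _ (qlt x hx'); rewrite E eqxx.
    * have hx' : 0 < x <= l by clear -hx x0; lia.
      have hy' : 0 < y <= l by clear -hy y0; lia.
      rewrite !wE ?lt0n // => E.
      by apply: qinj => //; apply: winj (qlt x hx') (qlt y hy') E.
  + move=> x y hx hy.
    have /gcase cx : x <= l by clear -hx; lia.
    have /gcase cy : y <= l by clear -hy; lia.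
    case: cx => [->|->|->|Ex]; case: cy => [->|->|->|Ey] //;
      rewrite ?g0 ?ga ?gl ?gE // => /eqP E.
    all: try by rewrite ?N1 ?N2 ?N3 ?N4 ?N5 ?N6 in E.
    all: try by case: (N7 _ Ex) => n1 n2; rewrite ?n1 ?n2 in E.
    all: try by case: (N7 _ Ey) => n1 n2; rewrite ?n1 ?n2 in E.
    all: try by case: (N8 _ Ex) => n1 n2; rewrite ?n1 ?n2 in E.
    all: try by case: (N8 _ Ey) => n1 n2; rewrite ?n1 ?n2 in E.
    all: try by case: (N9 _ Ex) => n1 n2; rewrite ?n1 ?n2 in E.
    all: try by case: (N9 _ Ey) => n1 n2; rewrite ?n1 ?n2 in E.
    move/eqP: E => E.
    apply: rinj => //; apply: einj E.
      by have := rlt _ Ex; clear; lia.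
    by have := rlt _ Ey; clear; lia.
  + move=> k hk.
    have /gcase ck : k <= l by clear -hk; lia.
    case: ck => [->|->|->|Ek]; rewrite ?g0 ?ga ?gl ?gE //.
    by apply: eH; have := rlt _ Ek; clear; lia.
  + move=> k hk.
    have /gcase ck : k <= l by clear -hk; lia.
    case: ck => [->|->|->|Ek].
    * rewrite g0 w0E modn_small; last by clear -al; lia.
      have -> : w 1 = w0 (qf a 1) by apply: wE.
      rewrite (q1 a2 al) //; apply/andP; split => //.
    * rewrite ga modn_small; last by clear -al; lia.
      rewrite !wE // ?(qa a2 al) ?(qa1 a2 al) //; [apply/andP; split => // | clear -a2; lia].
    * rewrite gl modnn w0E wE ?(ql a2 al); [apply/andP; split => // | clear -al; lia].
    * rewrite gE // modn_small; last exact: isEk Ek.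
      have k0 : 0 < k by move: Ek; rewrite /isEf; clear; lia.
      rewrite !wE //.
      have := ein _ (rlt _ Ek) => /andP [i1 i2].
      by case: (qr a2 al Ek) => [[-> ->]|[-> ->]]; apply/andP.
- by apply/imsetP; exists ord0.
- move=> t ht; apply/imsetP.
  have [k /andP [k0 kl] qk] := qsurj a2 al ht.
  by exists (Ordinal kl) => //=; rewrite wE // qk.
Qed.


Lemma modS l m : (m %% l).+1 %% l = m.+1 %% l.
Proof. by rewrite -addn1 modnDml addn1. Qed.

Lemma modinj l i x y : x < l -> y < l -> (x + i) %% l = (y + i) %% l -> x = y.
Proof. by move=> hx hy /eqP; rewrite eqn_modDr !modn_small // => /eqP. Qed.

Lemma rot_back l i t : i < l -> t < l -> ((t + l - i) %% l + i) %% l = t.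
Proof.
move=> il tl; rewrite modnDml (_ : t + l - i + i = t + l); last by lia.
by rewrite modnDr modn_small.
Qed.

Lemma modsub l b c : c <= l -> c <= b -> (b %% l + l - c) %% l = (b - c) %% l.
Proof.
move=> cl cb; rewrite (_ : b %% l + l - c = b %% l + (l - c)); last by lia.
rewrite modnDml (_ : b + (l - c) = (b - c) + l); last by lia.
by rewrite modnDr.
Qed.

Unset Implicit Arguments.
Theorem claim2p4 (V : finType) (H : {set {set V}}) (l : nat)
    (v : nat -> V) (e : nat -> {set V}) (u : V) (U : {set V}) (i j : nat) :
  three_graph H ->
  maximal_berge_cycle H l v e ->
  u \notin cycle_vset l v ->
  usable H l v e u U ->
  i < l -> j < l -> i != j -> v i \in U -> v j \in U ->
  adjacent H (v i) (v j) ->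
  EE H (v i) (v j) \subset [set e i; e j].
Proof.
move=> H3 [hC hmax] uC [Usub U1 U2 U3] il jl ij viU vjU adj.
have hC' := hC; case: hC' => l2 vinj einj eH ein.
have l0 : 0 < l by clear -l2; lia.
apply/subsetP => f fE; rewrite !inE; apply/negPn/negP; rewrite negb_or => /andP [fni fnj].
move: fE; rewrite inE => /andP [fH /andP [vif vjf]].
have [fi [fj [fiA fjA fij]]] := U3 i j il jl ij viU vjU.
move: fiA fjA; rewrite !inE => /andP [fine /andP [fiH /andP [ufi vfi]]] /andP [fjne /andP [fjH /andP [ufj vfj]]].
pose a := (j + l - i) %% l.
have aj : (a + i) %% l = j by rewrite /a rot_back.
have al : a < l by rewrite /a ltn_pmod.
have a0 : a != 0.
  by apply: contra ij => /eqP a0; rewrite -aj a0 add0n modn_small.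
have a1 : a != 1.
  apply/negP => /eqP a1; have := U2 i j il jl ij viU vjU.
  by rewrite -aj a1 add1n eqxx.
have al1 : a != l.-1.
  apply/negP => /eqP a1'; have ji : j != i by rewrite eq_sym.
  have := U2 j i jl il ji vjU viU.
  rewrite -aj a1' modS.
  by rewrite (_ : (l.-1 + i).+1 = i + l); [rewrite modnDr modn_small // eqxx | clear -l0; lia].
have a2 : 2 <= a by clear -a0 a1; lia.
have a2l : a + 2 <= l by clear -al al1 a2; lia.
pose w0 k := v ((k + i) %% l).
pose e0 k := e ((k + i) %% l).
have [w [g [B [uw sub]]]] : exists w g, berge_cycle H l.+1 w g /\ u \in cycle_vset l.+1 w /\
   (forall k, k < l -> w0 k \in cycle_vset l.+1 w).
  apply: (core (l:=l) (a:=a) (w0 := w0) (u:=u) (e0 := e0) (fi := fi) (fj := fj) (f := f) H3 a2 a2l); try done.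
  - move=> x y hx hy /vinj E.
    by apply: (modinj hx hy); apply: E; rewrite ltn_pmod.
  - move=> x y hx hy /einj E.
    by apply: (modinj hx hy); apply: E; rewrite ltn_pmod.
  - by move=> k hk; apply: eH; rewrite ltn_pmod.
  - move=> k hk; have := ein ((k + i) %% l) (ltn_pmod _ l0).
    by rewrite /w0 /e0 modS addSn.
  - move=> k hk; apply: contra uC => /eqP ->; apply/imsetP.
    by exists (Ordinal (ltn_pmod (k + i) l0)).
  - by rewrite /w0 (_ : l.-1 + i = i + l - 1) //; clear -l0; lia.
  - by rewrite /e0 (_ : l.-2 + i = i + l - 2) //; clear -l2; lia.
  - rewrite /w0 (_ : a.-1 + i = (a + i) - 1); last by clear -a2; lia.
    by rewrite -modsub ?aj //; clear -a2 l2; lia.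
  - rewrite /e0 (_ : a.-2 + i = (a + i) - 2); last by clear -a2; lia.
    by rewrite -modsub ?aj //; clear -a2 l2; lia.
  - by rewrite /w0 add0n modn_small.
  - by rewrite /w0 aj.
  - by rewrite /e0 add0n modn_small.
  - by rewrite /e0 aj.
apply: (hmax _ _ _ B); apply/properP; split; last by exists u.
apply/subsetP => x /imsetP [t _ ->].
have := sub _ (ltn_pmod (t + l - i) l0).
by rewrite /w0 rot_back.
Qed.
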